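(* Let $(f_0, M_0, \Lambda_0, \mathcal{Q}_0)$ be a SIMDG with induced set $\mathcal{P}_0$ and training distribution $P_{\mathrm{tr}}$, let $\mathcal{F}$ be a class of measurable functions $\mathbb{R}^p\to\mathbb{R}$, let $\mathcal{I}_0$ be the set of invariant functions in $\mathcal{F}$, and let $f_\star\in\mathcal{I}_0$ be the BCF, as in the context. Suppose that (i) for all $f,g\in\mathcal{F}$ and all $P\in\mathcal{P}_0$, $f(X)=g(X)$ $P_{\mathrm{tr}}$-a.s. implies $f(X)=g(X)$ $P$-a.s.; and (ii) $\inf_{P\in\mathcal{P}_0}\mathrm{E}_P\big[(\mathrm{E}_P[\gamma_0(V)\mid R^\top X]-\mathrm{E}_P[\gamma_0(V)\mid X])^2\big]=0$. Then, with $\mathcal{R}(P,f):=\mathrm{E}_P[(Y-f(X))^2]$, $$\mathcal{R}(P_{\mathrm{tr}},f_\star)=\inf_{f\in\mathcal{I}_0}\mathcal{R}(P_{\mathrm{tr}},f).$$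
   Context: Fix integers $p,r\ge 1$. A SIMDG is a tuple $(f_0, M_0, \Lambda_0, \mathcal{Q}_0)$ where $f_0:\mathbb{R}^p\to\mathbb{R}$ is measurable, $M_0\in\mathbb{R}^{p\times r}$, $\Lambda_0$ is a distribution on $\mathbb{R}^{1+p}$ such that $(U,V)\sim\Lambda_0$ satisfies $\mathrm{E}[(U,V)]=0$ and $\mathrm{E}[\|(U,V)\|_2^2]<\infty$, and $\mathcal{Q}_0$ is a set of distributions on $\mathbb{R}^r$. For each $Q\in\mathcal{Q}_0$ the model induces a distribution $P$ of $(U,V,X,Y,Z)$ by drawing $((U,V),Z)\sim\Lambda_0\otimes Q$ and setting $X = M_0 Z + V$, $Y = f_0(X)+U$; $\mathcal{P}_0$ is the set of all such induced distributions. Standing setting: $\sup_{P\in\mathcal{P}_0}\mathrm{E}_P[f_0(X)]^2<\infty$; $Q_{\mathrm{tr}}\in\mathcal{Q}_0$ satisfies $\mathrm{E}_{Q_{\mathrm{tr}}}[Z]=0$ and $\mathrm{E}_{Q_{\mathrm{tr}}}[ZZ^\top]\succ 0$; $P_{\mathrm{tr}}$ is the distribution induced by $Q_{\mathrm{tr}}$. A function $f\in\mathcal{F}$ is invariant if the distribution of $Y-f(X)$ under $P_{\mathrm{tr}}$ equals its distribution under $P$ for every $P\in\mathcal{P}_0$; $\mathcal{I}_0$ is the set of invariant $f\in\mathcal{F}$. Let $q=\mathrm{rank}(M_0)$; if $q<p$, $R\in\mathbb{R}^{p\times(p-q)}$ has columns forming an orthonormal basis of $\ker(M_0^\top)$,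 and if $q=p$, $R$ is the zero vector in $\mathbb{R}^{p\times 1}$. $\gamma_0(v):=\mathrm{E}_{P_{\mathrm{tr}}}[U\mid V=v]$. The BCF is $f_\star(x):=f_0(x)+\mathrm{E}_{P_{\mathrm{tr}}}[\gamma_0(V)\mid R^\top X = R^\top x]$, defined for $P_{\mathrm{tr}}$-a.e. $x$. *)

(* Defs.v *)
From HB Require Import structures.
From mathcomp Require Import all_boot all_order all_algebra.
From mathcomp Require Import all_classical all_reals all_analysis.
Set Implicit Arguments. Unset Strict Implicit. Unset Printing Implicit Defensive.
Import Order.TTheory GRing.Theory Num.Theory.
Local Open Scope classical_set_scope.
Local Open Scope ring_scope.

(* Vectors of R^n are n-tuples (measurable structure: product Borel sigma-algebra,
   generated by the coordinates).  Matrix-vector product. *)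
Definition mv (R : realType) (m n : nat) (M : 'M[R]_(m, n)) (z : n.-tuple R)
  : m.-tuple R :=
  [tuple \sum_(j < n) M i j * tnth z j | i < m].

Definition vadd (R : realType) (n : nat) (a b : n.-tuple R) : n.-tuple R :=
  [tuple tnth a i + tnth b i | i < n].

Definition orthonormal_basis_ker (R : realType) (p r k : nat)
  (M0 : 'M[R]_(p, r)) (Rm : 'M[R]_(p, k)) : Prop :=
  [/\ Rm^T *m Rm = 1%:M,
      M0^T *m Rm = 0
    & forall v : 'cV[R]_p, M0^T *m v = 0 -> exists c : 'cV[R]_k, v = Rm *m c].

Definition is_cond_exp (R : realType) (d : measure_display) (Om : measurableType d)
  (d' : measure_display) (S : measurableType d')
  (P : {measure set Om -> \bar R}) (Y : Om -> R) (W : Om -> S) (h : S -> R) : Prop :=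
  [/\ measurable_fun setT h,
      P.-integrable setT (EFin \o Y),
      P.-integrable setT (EFin \o (h \o W))
    & forall B : set S, measurable B ->
        (\int[P]_(x in W @^-1` B) (Y x)%:E = \int[P]_(x in W @^-1` B) (h (W x))%:E)%E].

(* The underlying sample space ((U,V),Z) of a SIMDG and its coordinates. *)
Notation Omega R p r := ((R * p.-tuple R) * r.-tuple R)%type.

Section SIMDG.
Variables (R : realType) (p r : nat) (M0 : 'M[R]_(p, r)) (f0 : p.-tuple R -> R).
Definition Uc (w : Omega R p r) : R := w.1.1.
Definition Vc (w : Omega R p r) : p.-tuple R := w.1.2.
Definition Zc (w : Omega R p r) : r.-tuple R := w.2.
Definition Xc (w : Omega R p r) : p.-tuple R := vadd (mv M0 (Zc w)) (Vc w).
Definition Yc (w : Omega R p r) : R := f0 (Xc w) + Uc w.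
End SIMDG.

(* The induced distribution P of (U,V,X,Y,Z) for Q is the image of Lambda0 (x) Q
   under w |-> (Uc w, Vc w, Xc w, Yc w, Zc w); we work with Lambda0 (x) Q directly. *)
Definition risk (R : realType) (p r : nat) (M0 : 'M[R]_(p, r)) (f0 : p.-tuple R -> R)
  (P : {measure set (Omega R p r) -> \bar R}) (f : p.-tuple R -> R) : \bar R :=
  (\int[P]_w ((Yc M0 f0 w - f (Xc M0 w)) ^+ 2)%:E)%E.

Definition invariant_set (R : realType) (p r : nat) (M0 : 'M[R]_(p, r))
  (f0 : p.-tuple R -> R) (L0 : probability (R * p.-tuple R)%type R)
  (Q0 : set (probability (r.-tuple R) R)) (Qtr : probability (r.-tuple R) R)
  (F : set (p.-tuple R -> R)) : set (p.-tuple R -> R) :=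
  [set f | F f /\ forall Q, Q0 Q -> forall B : set R, measurable B ->
     (L0 \x Qtr)%E ((fun w => Yc M0 f0 w - f (Xc M0 w)) @^-1` B)
     = (L0 \x Q)%E ((fun w => Yc M0 f0 w - f (Xc M0 w)) @^-1` B)].

Definition posdef (R : realType) (n : nat) (S : 'M[R]_n) : Prop :=
  forall v : 'rV[R]_n, v != 0 -> 0 < (v *m S *m v^T) 0 0.

Definition second_moment (R : realType) (r : nat) (Q : probability (r.-tuple R) R)
  : 'M[R]_r :=
  \matrix_(i, j) fine (\int[Q]_z (tnth z i * tnth z j)%:E)%E.

(* Main.v *)
Require Import Defs.
From HB Require Import structures.
From mathcomp Require Import all_boot all_order all_algebra.
From mathcomp Require Import all_classical all_reals all_analysis.
From mathcomp Require Import measurable_realfun.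
From mathcomp Require Import ring lra.
Import Order.TTheory GRing.Theory Num.Theory.
Local Open Scope classical_set_scope.
Local Open Scope ring_scope.
Import HBSimple HBNNSimple numFieldNormedType.Exports.

Section L2.
Context d (Om : measurableType d) (R : realType).
Variable mu : {measure set Om -> \bar R}.

Definition sqi (f : Om -> R) := measurable_fun setT f /\
  mu.-integrable setT (fun x => (f x ^+ 2)%:E).

Lemma sqi_mul f g : sqi f -> sqi g -> mu.-integrable setT (fun x => (f x * g x)%:E).
Proof.
move=> [mf if2] [mg ig2].
have i := integrableD measurableT if2 ig2.
apply: (le_integrable _ _ _ i) => //.
  by apply/measurable_EFinP; apply: measurable_funM.
move=> x _ /=; rewrite lee_fin normrM [`|f x ^+ 2 + _|]ger0_norm ?addr_ge0 ?sqr_ge0 //.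
rewrite -[f x ^+ 2]real_normK ?num_real // -[g x ^+ 2]real_normK ?num_real //.
have := normr_ge0 (f x); have := normr_ge0 (g x).
have := sqr_ge0 (`|f x| - `|g x|); nra.
Qed.

Lemma sqi_add f g : sqi f -> sqi g -> sqi (fun x => f x + g x).
Proof.
move=> [mf if2] [mg ig2]; split; first exact: measurable_funD.
have i := integrableD measurableT (integrableZl measurableT 2 if2) (integrableZl measurableT 2 ig2).
apply: (le_integrable _ _ _ i) => //.
  by apply/measurable_EFinP; apply: measurable_funX; apply: measurable_funD.
move=> x _ /=; rewrite lee_fin.
rewrite [`|(_ + _) ^+ 2|]ger0_norm ?sqr_ge0 // [`|_ + _|]ger0_norm; last first.
  by apply: addr_ge0; apply: mulr_ge0 => //; exact: sqr_ge0.
have := sqr_ge0 (f x - g x); rewrite sqrrB sqrrD; lra.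
Qed.

Lemma sqi_opp f : sqi f -> sqi (fun x => - f x).
Proof.
move=> [mf if2]; split; first exact: measurable_funN.
by under eq_fun do rewrite sqrrN.
Qed.

Lemma sqi_sub f g : sqi f -> sqi g -> sqi (fun x => f x - g x).
Proof. by move=> sf sg; apply: sqi_add => //; exact: sqi_opp. Qed.

End L2.
Arguments sqi {d Om R} mu f.
Arguments sqi_mul {d Om R mu f g}.
Arguments sqi_add {d Om R mu f g}.
Arguments sqi_sub {d Om R mu f g}.
Arguments sqi_opp {d Om R mu f}.

Section generic.
Context d (Om : measurableType d) d' (S : measurableType d') (R : realType).
Variable mu : {measure set Om -> \bar R}.
Variables (Y : Om -> R) (W : Om -> S) (h : S -> R).
Hypothesis ce : is_cond_exp mu Y W h.
Hypothesis mW : measurable_fun setT W.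

Let mh : measurable_fun setT h. Proof. by case: ce. Qed.
Let iY : mu.-integrable setT (EFin \o Y). Proof. by case: ce. Qed.
Let ihW : mu.-integrable setT (EFin \o (h \o W)). Proof. by case: ce. Qed.

Let mY : measurable_fun setT Y.
Proof. apply/measurable_EFinP. exact: (measurable_int mu iY). Qed.

Let mhW : measurable_fun setT (h \o W).
Proof. exact: measurableT_comp. Qed.

Lemma ce_indic (A : set S) : measurable A ->
  (\int[mu]_x (Y x * \1_A (W x))%:E = \int[mu]_x (h (W x) * \1_A (W x))%:E)%E.
Proof.
move=> mA; case: ce => _ _ _ H; have E := H A mA.
rewrite (integral_mkcond (W @^-1` A)) (integral_mkcond (W @^-1` A) (fun x => (h (W x))%:E)) in E.
transitivity (\int[mu]_x ((EFin \o Y) \_ (W @^-1` A)) x)%E.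
  apply: eq_integral => x _; rewrite /restrict /= indicE.
  have [HA|HA] := boolP (W x \in A).
    by rewrite mulr1 mem_set //=; apply: set_mem.
  by rewrite mulr0 memNset //= => /mem_set; apply/negP.
rewrite E; apply: eq_integral => x _; rewrite /restrict /= indicE.
have [HA|HA] := boolP (W x \in A).
  by rewrite mulr1 mem_set //=; apply: set_mem.
by rewrite mulr0 memNset //= => /mem_set; apply/negP.
Qed.

Lemma int_indic_W (u : Om -> R) (A : set S) : measurable A ->
  mu.-integrable setT (EFin \o u) ->
  mu.-integrable setT (fun x => (u x * \1_A (W x))%:E).
Proof.
move=> mA iu; apply: (le_integrable _ _ _ iu) => //.
  apply/measurable_EFinP; apply: measurable_funM.
    exact/measurable_EFinP/(measurable_int mu iu).
  by apply: measurableT_comp => //; exact: measurable_indic.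
move=> x _ /=; rewrite lee_fin normrM indicE.
by case: (_ \in _); rewrite ?normr1 ?normr0 ?mulr1 ?mulr0.
Qed.

Lemma int_sfun_W (u : Om -> R) (s : {sfun S >-> R}) :
  mu.-integrable setT (EFin \o u) ->
  (\int[mu]_x (u x * s (W x))%:E =
   \sum_(c <- finmap.enum_fset (fset_set (range s)))
      (c%:E * \int[mu]_x (u x * \1_(s @^-1` [set c]) (W x))%:E))%E.
Proof.
move=> iu.
have E y : s y = \sum_(c <- finmap.enum_fset (fset_set (range s)))
                    (c * \1_(s @^-1` [set c]) y).
  by rewrite [LHS]fimfunE fsbig_finite //; exact: fimfunP.
under eq_integral do rewrite E mulr_sumr -sumEFin.
rewrite integral_sum //.
  apply: eq_bigr => c _; rewrite -integralZl //.
    by apply: eq_integral => x _; rewrite -EFinM mulrCA.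
  by apply: int_indic_W => //; exact: measurable_sfunP.
move=> c; under eq_fun do rewrite mulrCA EFinM.
apply: integrableZl => //; apply: int_indic_W => //; exact: measurable_sfunP.
Qed.

Lemma ce_sfun (s : {sfun S >-> R}) :
  (\int[mu]_x (Y x * s (W x))%:E = \int[mu]_x (h (W x) * s (W x))%:E)%E.
Proof.
rewrite (int_sfun_W Y s iY) (int_sfun_W (h \o W) s ihW); apply: eq_bigr => c _.
by rewrite ce_indic //; exact: measurable_sfunP.
Qed.

Lemma dct_W (u : Om -> R) (phi : S -> R) (mE : measurable_fun setT (EFin \o phi))
  (phi0 : forall y, 0 <= phi y) :
  measurable_fun setT u ->
  mu.-integrable setT (fun x => (u x * phi (W x))%:E) ->
  (fun n => (\int[mu]_x (u x * nnsfun_approx measurableT mE n (W x))%:E)%E)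
   @ \oo --> (\int[mu]_x (u x * phi (W x))%:E)%E.
Proof.
move=> mu' iu.
have mphi : measurable_fun setT phi by apply/measurable_EFinP.
set sn := nnsfun_approx measurableT mE.
have sn_le n y : sn n y <= phi y.
  rewrite /sn nnsfun_approxE -lee_fin.
  have f0 : forall z, setT z -> (0 <= (EFin \o phi) z)%E by move=> z _; rewrite /= lee_fin.
  exact: (le_approx n f0 (I : setT y)).
have sn_ge0 n y : 0 <= sn n y by [].
have sn_cvg y : (fun n => sn n y : R) n @[n --> \oo] --> phi y.
  have := cvg_nnsfun_approx measurableT mE (fun z _ => phi0 z : (0 <= (EFin \o phi) z)%E) (I : setT y).
  by move/fine_cvg.
have mf_ : forall n, measurable_fun setT (fun x => (u x * sn n (W x))%:E).
  move=> n; apply/measurable_EFinP; apply: measurable_funM => //.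
  by apply: measurableT_comp => //.
have mf : measurable_fun setT (fun x => (u x * phi (W x))%:E) by exact: measurable_int iu.
have f_f : {ae mu, forall x, setT x -> (fun n => (u x * sn n (W x))%:E) n @[n --> \oo] --> (u x * phi (W x))%:E}.
  apply: aeW => x _; apply: cvg_EFin; first by apply: nearW.
  exact: cvgMl_tmp.
have ig : mu.-integrable setT (fun x => `|(u x * phi (W x))%:E|)%E by exact: integrable_abse.
have f_g : {ae mu, forall x n, setT x -> (`|(u x * sn n (W x))%:E| <= `|(u x * phi (W x))%:E|)%E}.
  apply: aeW => x n _ /=; rewrite lee_fin !normrM ler_wpM2l //.
  by rewrite !ger0_norm.
by have [_ _] := dominated_convergence measurableT mf_ mf f_f ig f_g.
Qed.

Lemma ce_nonneg (phi : S -> R) : measurable_fun setT phi -> (forall y, 0 <= phi y) ->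
  mu.-integrable setT (fun x => (Y x * phi (W x))%:E) ->
  mu.-integrable setT (fun x => (h (W x) * phi (W x))%:E) ->
  (\int[mu]_x (Y x * phi (W x))%:E = \int[mu]_x (h (W x) * phi (W x))%:E)%E.
Proof.
move=> mphi phi0 i1 i2.
have mE : measurable_fun setT (EFin \o phi) by apply/measurable_EFinP.
have c1 := dct_W Y phi mE phi0 mY i1.
have c2 := dct_W (h \o W) phi mE phi0 mhW i2.
have E : (fun n => (\int[mu]_x (Y x * nnsfun_approx measurableT mE n (W x))%:E)%E)
  = (fun n => (\int[mu]_x (h (W x) * nnsfun_approx measurableT mE n (W x))%:E)%E).
  apply/funext => n.
  exact: (ce_sfun (nnsfun_approx measurableT mE n)).
rewrite E in c1.
exact: (cvg_unique _ c1 c2).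
Qed.

Lemma ce_gen (phi : S -> R) : measurable_fun setT phi ->
  mu.-integrable setT (fun x => (Y x * phi (W x))%:E) ->
  mu.-integrable setT (fun x => (h (W x) * phi (W x))%:E) ->
  (\int[mu]_x (Y x * phi (W x))%:E = \int[mu]_x (h (W x) * phi (W x))%:E)%E.
Proof.
move=> mphi i1 i2.
pose pp y := (phi y + `|phi y|) / 2.
pose pn y := (`|phi y| - phi y) / 2.
have Ep y : phi y = pp y - pn y by rewrite /pp /pn; field.
have mpp : measurable_fun setT pp.
  apply: measurable_funM => //; apply: measurable_funD => //; exact: measurableT_comp.
have mpn : measurable_fun setT pn.
  apply: measurable_funM => //; apply: measurable_funB => //; exact: measurableT_comp.
have nb y : - `|phi y| <= phi y /\ phi y <= `|phi y|.
  by split; [rewrite lerNl -normrN ler_norm | exact: ler_norm].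
have pp0 y : 0 <= pp y by have [? ?] := nb y; rewrite /pp; lra.
have pn0 y : 0 <= pn y by have [? ?] := nb y; rewrite /pn; lra.
have ppb y : `|pp y| <= `|phi y|.
  by rewrite ger0_norm //; have [? ?] := nb y; rewrite /pp; lra.
have pnb y : `|pn y| <= `|phi y|.
  by rewrite ger0_norm //; have [? ?] := nb y; rewrite /pn; lra.
have ib (u : Om -> R) (q : S -> R) : measurable_fun setT u -> measurable_fun setT q ->
    (forall y, `|q y| <= `|phi y|) ->
    mu.-integrable setT (fun x => (u x * phi (W x))%:E) ->
    mu.-integrable setT (fun x => (u x * q (W x))%:E).
  move=> mu' mq qb iu; apply: (le_integrable _ _ _ iu) => //.
    apply/measurable_EFinP; apply: measurable_funM => //; exact: measurableT_comp.
  by move=> x _ /=; rewrite lee_fin !normrM ler_wpM2l.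
have E (u : Om -> R) : measurable_fun setT u ->
    mu.-integrable setT (fun x => (u x * phi (W x))%:E) ->
    (\int[mu]_x (u x * phi (W x))%:E = \int[mu]_x (u x * pp (W x))%:E
       - \int[mu]_x (u x * pn (W x))%:E)%E.
  move=> mu' iu; rewrite -integralB //; try exact: ib.
  by apply: eq_integral => x _; rewrite -EFinB -mulrBr -Ep.
rewrite (E _ mY i1) (E _ mhW i2).
rewrite (@ce_nonneg pp mpp pp0 (ib _ _ mY mpp ppb i1) (ib _ _ mhW mpp ppb i2)).
by rewrite (@ce_nonneg pn mpn pn0 (ib _ _ mY mpn pnb i1) (ib _ _ mhW mpn pnb i2)).
Qed.

Lemma fin_int (f : Om -> \bar R) : mu.-integrable setT f ->
  (\int[mu]_x f x = (fine (\int[mu]_x f x))%:E)%E.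
Proof. by move=> /integrable_fin_num/fineK ->. Qed.

Lemma ce_sq : mu.-integrable setT (fun x => (Y x ^+ 2)%:E) ->
  mu.-integrable setT (fun x => (h (W x) ^+ 2)%:E).
Proof.
move=> iY2.
pose phi (n : nat) y := if `|h y| <= n%:R then h y else 0.
have mphi n : measurable_fun setT (phi n).
  apply: measurable_fun_ifT => //.
  apply: measurable_fun_ler => //; exact: measurableT_comp.
have phib n y : `|phi n y| <= n%:R.
  by rewrite /phi; case: ifPn => // _; rewrite normr0.
have phih n y : `|phi n y| <= `|h y|.
  by rewrite /phi; case: ifPn => // _; rewrite normr0.
have phisq n y : h y * phi n y = phi n y ^+ 2.
  by rewrite /phi; case: ifPn => _; rewrite expr2 // !mulr0.
have ibd (u : Om -> R) n : mu.-integrable setT (EFin \o u) -> measurable_fun setT u ->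
    mu.-integrable setT (fun x => (u x * phi n (W x))%:E).
  move=> iu mu'.
  have ig := integrableZl measurableT n%:R (integrable_norm iu).
  apply: (le_integrable _ _ _ ig) => //.
    apply/measurable_EFinP; apply: measurable_funM => //; exact: measurableT_comp.
  move=> x _ /=; rewrite lee_fin normrM (normrM n%:R) normr_id normr_nat mulrC.

  by rewrite ler_wpM2r.
have i1 n := ibd Y n iY mY.
have i2 n := ibd (h \o W) n ihW mhW.
have key n : (\int[mu]_x (h (W x) * phi n (W x))%:E <= \int[mu]_x (Y x ^+ 2)%:E)%E.
  have E := @ce_gen (phi n) (mphi n) (i1 n) (i2 n).
  have ih2 : mu.-integrable setT (fun x => (Y x ^+ 2 + h (W x) * phi n (W x))%:E).
    under eq_fun do rewrite EFinD.
    exact: integrableD.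
  have ih3 := integrableZl measurableT (2^-1) ih2.
  have le1 : (\int[mu]_x (Y x * phi n (W x))%:E <=
      \int[mu]_x ((2^-1)%:E * (Y x ^+ 2 + h (W x) * phi n (W x))%:E))%E.
    apply: le_integral => // x _; rewrite -EFinM lee_fin phisq.
    have := sqr_ge0 (Y x - phi n (W x)); rewrite sqrrB; lra.
  have eqD : (\int[mu]_x (Y x ^+ 2 + h (W x) * phi n (W x))%:E =
     \int[mu]_x (Y x ^+ 2)%:E + \int[mu]_x (h (W x) * phi n (W x))%:E)%E.
    under eq_integral do rewrite EFinD.
    exact: integralD.
  rewrite integralZl // eqD in le1.
  rewrite E in le1; move: le1.
  rewrite (fin_int _ iY2) (fin_int _ (i2 n)).
  set a := fine _; set A := fine _.
  by rewrite -EFinD -EFinM !lee_fin; lra.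
pose g n x := (h (W x) * phi n (W x))%:E.
have mg n : measurable_fun setT (g n).
  apply/measurable_EFinP; apply: measurable_funM => //; exact: measurableT_comp.
have g0 n x : (0 <= g n x)%E by rewrite /g lee_fin phisq sqr_ge0.
have gnd x : {homo g^~ x : n m / (n <= m)%N >-> (n <= m)%E}.
  move=> n m nm; rewrite /g !phisq lee_fin /phi.
  case: ifPn => hn; case: ifPn => hm //; rewrite ?expr0n ?sqr_ge0 //.
  by move: hm; rewrite (le_trans hn) // ler_nat.
have glim x : limn (g^~ x) = (h (W x) ^+ 2)%:E.
  apply: cvg_lim => //; apply: cvg_near_cst.
  exists (Num.truncn `|h (W x)|).+1 => // n /= Hn.
  rewrite /g /phi; case: ifPn; first by rewrite expr2.
  move/negP; elim; apply: ltW; apply: (lt_le_trans (truncnS_gt _)).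
  by rewrite ler_nat.
have mc := monotone_convergence mu measurableT mg (fun n x _ => g0 n x) (fun x _ => gnd x).
have bnd : (\int[mu]_x (h (W x) ^+ 2)%:E <= \int[mu]_x (Y x ^+ 2)%:E)%E.
  under eq_integral do rewrite -glim.
  rewrite mc; apply: lime_le.
    apply: ereal_nondecreasing_is_cvgn => n m nm.
    apply: ge0_le_integral => // x _; exact: gnd.
  by apply: nearW => n; exact: key.
apply/integrableP; split.
  apply/measurable_EFinP; exact: measurable_funX.
under eq_integral do rewrite abse_EFin ger0_norm ?sqr_ge0 //.
apply: le_lt_trans bnd _.
by have /integrableP[_ ] := iY2; under eq_integral do rewrite abse_EFin ger0_norm ?sqr_ge0 //.
Qed.

Lemma ce_proj (k : S -> R) : measurable_fun setT k -> sqi mu Y ->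
  (\int[mu]_x ((Y x - h (W x)) ^+ 2)%:E <= \int[mu]_x ((Y x - k (W x)) ^+ 2)%:E)%E.
Proof.
move=> mk sY.
have mkW : measurable_fun setT (k \o W) by exact: measurableT_comp.
have sh : sqi mu (h \o W) := conj mhW (ce_sq sY.2).
have mYk : measurable_fun setT (fun x => Y x - k (W x)) by exact: measurable_funB.
have [ik|nik] := pselect (mu.-integrable setT (fun x => ((Y x - k (W x)) ^+ 2)%:E)); last first.
  have : ~ (\int[mu]_x `|((Y x - k (W x)) ^+ 2)%:E| < +oo)%E.
    move=> H; apply: nik; apply/integrableP; split => //.
    by apply/measurable_EFinP; exact: measurable_funX.
  under eq_integral do rewrite abse_EFin ger0_norm ?sqr_ge0 //.
  move/negP; rewrite -leNgt leye_eq => /eqP ->; exact: leey.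
have sk : sqi mu (k \o W).
  have -> : k \o W = fun x => Y x - (Y x - k (W x)) by apply/funext => x /=; ring.
  exact: sqi_sub sY (conj mYk ik).
have sa : sqi mu (fun x => Y x - h (W x)) by exact: sqi_sub sY sh.
have sb : sqi mu (fun x => h (W x) - k (W x)) by exact: sqi_sub sh sk.
have iab := sqi_mul sa sb.
pose phi y := h y - k y.
have mphi : measurable_fun setT phi by exact: measurable_funB.
have i1 : mu.-integrable setT (fun x => (Y x * phi (W x))%:E) by exact: sqi_mul sY sb.
have i2 : mu.-integrable setT (fun x => (h (W x) * phi (W x))%:E) by exact: sqi_mul sh sb.
have Eab : (\int[mu]_x ((Y x - h (W x)) * (h (W x) - k (W x)))%:E = 0)%E.
  transitivity (\int[mu]_x ((Y x * phi (W x))%:E - (h (W x) * phi (W x))%:E))%E.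
    by apply: eq_integral => x _; rewrite -EFinB -mulrBl.
  by rewrite integralB // (@ce_gen phi mphi i1 i2) subee // (integrable_fin_num _ i2).
have i2ab := integrableZl measurableT 2 iab.
have E : (\int[mu]_x ((Y x - k (W x)) ^+ 2)%:E =
   \int[mu]_x ((Y x - h (W x)) ^+ 2)%:E + \int[mu]_x ((h (W x) - k (W x)) ^+ 2)%:E)%E.
  transitivity (\int[mu]_x (((Y x - h (W x)) ^+ 2)%:E + ((h (W x) - k (W x)) ^+ 2)%:E
      + 2%:E * ((Y x - h (W x)) * (h (W x) - k (W x)))%:E))%E.
    apply: eq_integral => x _; rewrite -EFinM -!EFinD; congr (_%:E); ring.
  rewrite integralD //; last exact: integrableD sa.2 sb.2.
  by rewrite integralZl // Eab mule0 adde0 integralD //; [exact: sa.2 | exact: sb.2].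
rewrite E leeDl //; apply: integral_ge0 => x _; rewrite lee_fin sqr_ge0 //.
Qed.
End generic.

Section meas.
Context (R : realType).

Lemma measurable_mv m n (M : 'M[R]_(m, n)) d (T : measurableType d)
  (g : T -> n.-tuple R) : measurable_fun setT g ->
  measurable_fun setT (fun x => mv M (g x)).
Proof.
move=> mg; apply/measurable_fun_tnthP => i.
have -> : (@tnth m R ^~ i \o (fun x => mv M (g x))) =
    (fun x => \sum_(j <- index_enum 'I_n) (M i j * tnth (g x) j)).
  by apply/funext => x /=; rewrite /mv tnth_mktuple.
apply: measurable_sum => j; apply: measurable_funM => //.
exact: (measurableT_comp (measurable_tnth j) mg).
Qed.

Lemma measurable_vadd n d (T : measurableType d) (a b : T -> n.-tuple R) :
  measurable_fun setT a -> measurable_fun setT b ->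
  measurable_fun setT (fun x => vadd (a x) (b x)).
Proof.
move=> ma mb; apply/measurable_fun_tnthP => i.
have -> : (@tnth n R ^~ i \o (fun x => vadd (a x) (b x))) =
    (fun x => tnth (a x) i + tnth (b x) i).
  by apply/funext => x /=; rewrite /vadd tnth_mktuple.
by apply: measurable_funD; exact: (measurableT_comp (measurable_tnth i)).
Qed.

Variables (p r : nat) (M0 : 'M[R]_(p, r)).

Lemma mUc : measurable_fun setT (@Uc R p r).
Proof. exact: (measurableT_comp measurable_fst measurable_fst). Qed.
Lemma mVc : measurable_fun setT (@Vc R p r).
Proof. exact: (measurableT_comp measurable_snd measurable_fst). Qed.
Lemma mZc : measurable_fun setT (@Zc R p r).
Proof. exact: measurable_snd. Qed.
Lemma mXc : measurable_fun setT (Xc M0).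
Proof. apply: measurable_vadd; [apply: measurable_mv; exact: mZc | exact: mVc]. Qed.

End meas.

Section marg.
Context d1 d2 (T1 : measurableType d1) (T2 : measurableType d2) (R : realType).
Variables (L : probability T1 R) (Q : probability T2 R).

Lemma marg_ge0 (g : T1 -> \bar R) : measurable_fun setT g -> (forall x, (0 <= g x)%E) ->
  (\int[(L \x Q)%E]_w g w.1 = \int[L]_x g x)%E.
Proof.
move=> mg g0; rewrite fubini_tonelli1 //=; last exact: measurableT_comp.
apply: eq_integral => x _; rewrite /fubini_F /=.
by move: (integral_cst Q measurableT (g x)) => ->; move: (probability_setT Q) => /= ->; rewrite mule1.
Qed.

Lemma marg_integrable (g : T1 -> \bar R) : measurable_fun setT g ->
  ((L \x Q)%E.-integrable setT (fun w => g w.1) <-> L.-integrable setT g).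
Proof.
move=> mg.
have E := @marg_ge0 (abse \o g) (measurableT_comp (@abse_measurable R setT) mg) (fun x => abse_ge0 (g x)).
split => /integrableP [_ H]; apply/integrableP; split.
- exact: mg.
- move: H; rewrite E; exact.
- exact: measurableT_comp.
- move: H; rewrite E; exact.
Qed.


Lemma marg_int (g : T1 -> \bar R) : L.-integrable setT g ->
  (\int[(L \x Q)%E]_w g w.1 = \int[L]_x g x)%E.
Proof.
move=> ig; have mg := measurable_int _ ig.
rewrite -integral12_prod_meas1; last exact/marg_integrable.
apply: eq_integral => x _; rewrite /fubini_F /=.
by move: (integral_cst Q measurableT (g x)) => ->; move: (probability_setT Q) => /= ->; rewrite mule1.
Qed.

Lemma marg_int_in (g : T1 -> \bar R) (D : set T1) : measurable D ->
  L.-integrable D g ->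
  (\int[(L \x Q)%E]_(w in fst @^-1` D) g w.1 = \int[L]_(x in D) g x)%E.
Proof.
move=> mD ig; rewrite (integral_mkcond (fst @^-1` D)) (integral_mkcond D).
rewrite -marg_int; last exact: ((integrable_mkcond g mD).1 ig).
by apply: eq_integral => w _.
Qed.

End marg.
Arguments marg_ge0 {d1 d2 T1 T2 R L} Q {g}.
Arguments marg_integrable {d1 d2 T1 T2 R L} Q {g}.
Arguments marg_int {d1 d2 T1 T2 R L} Q {g}.
Arguments marg_int_in {d1 d2 T1 T2 R L} Q {g D}.

Lemma mpre d1 d2 (T1 : measurableType d1) (T2 : measurableType d2) (f : T1 -> T2)
  (B : set T2) : measurable_fun setT f -> measurable B -> measurable (f @^-1` B).
Proof. by move=> mf mB; rewrite -[f @^-1` B]setTI; exact: mf. Qed.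

Section spec.
Context (R : realType) (p r : nat) (M0 : 'M[R]_(p, r)).
Variables (L0 : probability (R * p.-tuple R)%type R) (gamma0 : p.-tuple R -> R).

Lemma ce_to_L0 (Q : probability (r.-tuple R) R) :
  is_cond_exp (L0 \x Q)%E (@Uc R p r) (@Vc R p r) gamma0 ->
  is_cond_exp L0 fst snd gamma0.
Proof.
case=> mg iU iG HB.
have mfst : measurable_fun setT (EFin \o (@fst R (p.-tuple R))).
  by apply/measurable_EFinP; exact: measurable_fst.
have mgs : measurable_fun setT (EFin \o (gamma0 \o (@snd R (p.-tuple R)))).
  by apply/measurable_EFinP; apply: measurableT_comp => //; exact: measurable_snd.
have i1 : L0.-integrable setT (EFin \o fst) by apply/(marg_integrable Q mfst).
have i2 : L0.-integrable setT (EFin \o (gamma0 \o snd)) by apply/(marg_integrable Q mgs).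
split => // B mB.
have mS : measurable (snd @^-1` B : set (R * p.-tuple R)) by apply: mpre => //; exact: measurable_snd.
rewrite -(marg_int_in Q mS); last exact: integrableS i1.
rewrite -(marg_int_in Q mS); last exact: integrableS i2.
exact: HB.
Qed.

Hypothesis ceL : is_cond_exp L0 fst snd gamma0.

Lemma tower (Q : probability (r.-tuple R) R) (B : set (p.-tuple R)) : measurable B ->
  (L0 \x Q)%E.-integrable setT (EFin \o (gamma0 \o @Vc R p r)) ->
  (\int[(L0 \x Q)%E]_(w in Xc M0 @^-1` B) (Uc w)%:E =
   \int[(L0 \x Q)%E]_(w in Xc M0 @^-1` B) (gamma0 (Vc w))%:E)%E.
Proof.
move=> mB iG.
case: ceL => _ iU _ HB.
have mfst : measurable_fun setT (EFin \o (@fst R (p.-tuple R))).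
  by apply/measurable_EFinP; exact: measurable_fst.
have iU' : (L0 \x Q)%E.-integrable setT (EFin \o @Uc R p r) by apply/(marg_integrable Q mfst).
have mX : measurable (Xc M0 @^-1` B) by apply: mpre => //; exact: mXc.
rewrite (integral_mkcond (Xc M0 @^-1` B)) (integral_mkcond (Xc M0 @^-1` B) (fun w => (gamma0 (Vc w))%:E)).
have if1 : (L0 \x Q)%E.-integrable setT ((fun w => (Uc w)%:E) \_ (Xc M0 @^-1` B)).
  by apply/(integrable_mkcond _ mX); exact: integrableS iU'.
have if2 : (L0 \x Q)%E.-integrable setT ((fun w => (gamma0 (Vc w))%:E) \_ (Xc M0 @^-1` B)).
  by apply/(integrable_mkcond _ mX); exact: integrableS iG.
rewrite -(integral21_prod_meas1 if1) -(integral21_prod_meas1 if2).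
apply: eq_integral => z _; rewrite /fubini_G.
pose Bz := (fun v => vadd (mv M0 z) v) @^-1` B.
have mBz : measurable Bz.
  apply: mpre => //; apply: measurable_vadd => //; exact: measurable_cst.
have mS : measurable (snd @^-1` Bz : set (R * p.-tuple R)) by apply: mpre => //; exact: measurable_snd.
have := HB Bz mBz.
rewrite (integral_mkcond (snd @^-1` Bz)) (integral_mkcond (snd @^-1` Bz) (fun x => (gamma0 x.2)%:E)).
by [].
Qed.


Lemma ce_X (Q : probability (r.-tuple R) R) (g : p.-tuple R -> R) :
  is_cond_exp (L0 \x Q)%E (gamma0 \o @Vc R p r) (Xc M0) g ->
  is_cond_exp (L0 \x Q)%E (@Uc R p r) (Xc M0) g.
Proof.
case=> mg iG igX HB.
have mfst : measurable_fun setT (EFin \o (@fst R (p.-tuple R))).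
  by apply/measurable_EFinP; exact: measurable_fst.
case: ceL => _ iU _ _.
have iU' : (L0 \x Q)%E.-integrable setT (EFin \o @Uc R p r) by apply/(marg_integrable Q mfst).
split => // B mB.
by rewrite (@tower Q B mB iG); exact: HB.
Qed.

Lemma mv_RX k (Rm : 'M[R]_(p, k)) : Rm^T *m M0 = 0 ->
  forall w, mv Rm^T (Xc M0 w) = mv Rm^T (Vc w).
Proof.
move=> H w; apply: eq_from_tnth => i.
rewrite /Xc /mv /vadd !tnth_mktuple.
under eq_bigr do rewrite tnth_mktuple mulrDr.
rewrite big_split /= [X in X + _](_ : _ = 0) ?add0r //.
under eq_bigr do rewrite tnth_mktuple mulr_sumr.
rewrite exchange_big /= big1 // => l _.
under eq_bigr do rewrite mulrA.
rewrite -mulr_suml.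
have := congr1 (fun N : 'M[R]_(k, r) => N i l) H; rewrite !mxE => ->.
by rewrite mul0r.
Qed.

End spec.

Lemma ce_compose d (Om : measurableType d) d1 (T : measurableType d1)
  d2 (S : measurableType d2) (R : realType) (mu : {measure set Om -> \bar R})
  (U : Om -> R) (V : Om -> T) (g : T -> R) (phi : T -> S) (W : Om -> S) (hs : S -> R) :
  measurable_fun setT phi -> (forall w, W w = phi (V w)) ->
  is_cond_exp mu U V g -> is_cond_exp mu (g \o V) W hs -> is_cond_exp mu U W hs.
Proof.
move=> mphi HW [_ iU _ H1] [mh _ ih H2]; split => // B mB.
have -> : W @^-1` B = V @^-1` (phi @^-1` B).
  by apply/seteqP; split => w /=; rewrite HW.
rewrite H1; last exact: mpre.
have <- : W @^-1` B = V @^-1` (phi @^-1` B).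
  by apply/seteqP; split => w /=; rewrite HW.
exact: H2.
Qed.

Lemma law_sq d (Om : measurableType d) (R : realType) (P1 P2 : {measure set Om -> \bar R})
  (g : Om -> R) : measurable_fun setT g ->
  (forall B, measurable B -> P1 (g @^-1` B) = P2 (g @^-1` B)) ->
  (\int[P1]_w (g w ^+ 2)%:E = \int[P2]_w (g w ^+ 2)%:E)%E.
Proof.
move=> mg H.
have mf : measurable_fun setT (fun y : R => (y ^+ 2)%:E).
  by apply/measurable_EFinP; exact: measurable_funX.
have f0 : {in setT, forall y : R, (0 <= (y ^+ 2)%:E)%E} by move=> y _; rewrite lee_fin sqr_ge0.
have E1 := ge0_integral_pushforward mg P1 measurableT mf f0.
have E2 := ge0_integral_pushforward mg P2 measurableT mf f0.
rewrite preimage_setT in E1 E2.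
rewrite -E1 -E2; apply: eq_measure_integral => A mA _.
exact: H.
Qed.

Lemma sq_split (R : realType) (a b t : R) : 0 < t ->
  (a + b) ^+ 2 <= (1 + t) * a ^+ 2 + (1 + t^-1) * b ^+ 2.
Proof.
move=> t0.
have tt : t * t^-1 = 1 by rewrite mulfV // gt_eqF.
have := sqr_ge0 (t * a - b) => H.
have Hb : b ^+ 2 * (t * t^-1) = b ^+ 2 by rewrite tt mulr1.
have ti0 : 0 < t^-1 by rewrite invr_gt0.
suff : 0 <= t * (t * a ^+ 2 + t^-1 * b ^+ 2 - 2 * a * b).
  by rewrite pmulr_rge0 //; nra.
nra.
Qed.

Lemma final_real (R : realType) (a b : R) : 0 <= b ->
  (forall t, 0 < t -> t <= 1 -> a <= (1 + t) * b + t ^+ 2 + t) -> a <= b.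
Proof.
move=> b0 H; apply/ler_addgt0Pr => e e0.
pose t := Num.min 1 (e / (b + 2)).
have t0 : 0 < t by rewrite lt_min ltr01 divr_gt0 //; lra.
have t1 : t <= 1 by rewrite ge_min lexx.
have te : t * (b + 2) <= e.
  by rewrite -ler_pdivlMr ?ge_min ?lexx ?orbT //; lra.
have := H t t0 t1.
have : t ^+ 2 <= t by rewrite expr2 ger_pMr.
nra.
Qed.

Arguments ce_to_L0 {R p r L0 gamma0} Q _.
Arguments ce_X {R p r M0 L0 gamma0} ceL Q {g} _.
Arguments tower {R p r M0 L0 gamma0} ceL Q {B} _ _.
Arguments mv_RX {R p r M0 k Rm} _ w.
Arguments ce_proj {d Om d' S R mu Y W h} ce mW {k} _ _.
Arguments mXc {R p r} M0.
Arguments mUc {R p r}.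
Arguments mVc {R p r}.
Arguments ce_compose {d Om d1 T d2 S R mu U V g phi W hs} _ _ _ _.
Arguments law_sq {d Om R P1 P2 g} _ _.
Arguments measurable_mv {R m n} M {d T g} _.


Theorem corollary1 (R : realType) (p r : nat)
  (f0 : p.-tuple R -> R) (M0 : 'M[R]_(p, r))
  (L0 : probability (R * p.-tuple R)%type R)
  (Q0 : set (probability (r.-tuple R) R))
  (Qtr : probability (r.-tuple R) R)
  (F : set (p.-tuple R -> R))
  (k : nat) (Rm : 'M[R]_(p, k))
  (gamma0 : p.-tuple R -> R) (hstar : k.-tuple R -> R)
  (gR : probability (r.-tuple R) R -> k.-tuple R -> R)
  (gX : probability (r.-tuple R) R -> p.-tuple R -> R) :
  (* SIMDG *)
  measurable_fun setT f0 ->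
  L0.-integrable setT (fun w => (w.1 ^+ 2 + \sum_(i < p) tnth w.2 i ^+ 2)%:E) ->
  (\int[L0]_w (w.1)%:E = 0)%E ->
  (forall i : 'I_p, \int[L0]_w (tnth w.2 i)%:E = 0)%E ->
  (* standing setting *)
  (exists C : R, forall Q, Q0 Q ->
     (\int[(L0 \x Q)%E]_w ((f0 (Xc M0 w)) ^+ 2)%:E <= C%:E)%E) ->
  Q0 Qtr ->
  (forall i : 'I_r, Qtr.-integrable setT (fun z => (tnth z i ^+ 2)%:E)) ->
  (forall i : 'I_r, \int[Qtr]_z (tnth z i)%:E = 0)%E ->
  posdef (second_moment Qtr) ->
  (* the function class *)
  (forall f, F f -> measurable_fun setT f) ->
  (* R: orthonormal basis of ker(M0^T), or the zero vector if rank M0 = p *)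
  ((\rank M0 < p)%N -> k = (p - \rank M0)%N /\ orthonormal_basis_ker M0 Rm) ->
  (\rank M0 = p -> k = 1%N /\ Rm = 0) ->
  (* gamma0(v) = E_Ptr[U | V = v] *)
  is_cond_exp (L0 \x Qtr)%E (@Uc R p r) (@Vc R p r) gamma0 ->
  (* f_star(x) = f0(x) + hstar(R^T x), hstar(.) = E_Ptr[gamma0(V) | R^T X = .] *)
  is_cond_exp (L0 \x Qtr)%E (gamma0 \o @Vc R p r)
    (fun w => mv Rm^T (Xc M0 w)) hstar ->
  (* f_star is in I_0 (it agrees P_tr-a.s. with an invariant f in F) *)
  (exists fs, invariant_set M0 f0 L0 Q0 Qtr F fs /\
     {ae (L0 \x Qtr)%E, forall w,
        fs (Xc M0 w) = f0 (Xc M0 w) + hstar (mv Rm^T (Xc M0 w))}) ->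
  (* assumption (i) *)
  (forall f g, F f -> F g -> forall Q, Q0 Q ->
     {ae (L0 \x Qtr)%E, forall w, f (Xc M0 w) = g (Xc M0 w)} ->
     {ae (L0 \x Q)%E, forall w, f (Xc M0 w) = g (Xc M0 w)}) ->
  (* versions of E_P[gamma0(V) | R^T X] and E_P[gamma0(V) | X] *)
  (forall Q, Q0 Q ->
     is_cond_exp (L0 \x Q)%E (gamma0 \o @Vc R p r)
       (fun w => mv Rm^T (Xc M0 w)) (gR Q) /\
     is_cond_exp (L0 \x Q)%E (gamma0 \o @Vc R p r) (Xc M0) (gX Q)) ->
  (* assumption (ii) *)
  ereal_inf [set (\int[(L0 \x Q)%E]_w
                   ((gR Q (mv Rm^T (Xc M0 w)) - gX Q (Xc M0 w)) ^+ 2)%:E)%E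
            | Q in Q0] = 0%E ->
  (* conclusion *)
  risk M0 f0 (L0 \x Qtr)%E (fun x => f0 x + hstar (mv Rm^T x))
  = ereal_inf [set risk M0 f0 (L0 \x Qtr)%E f
              | f in invariant_set M0 f0 L0 Q0 Qtr F].
Proof.
move=> mf0 iL0 EU EV [C HC] Qtr0 iZ2 EZ pd mF rk1 rk2 ceG ceH [fs [fsI fsae]] hypi ceQ infii.
have ceL := ce_to_L0 Qtr ceG.
have H0 : Rm^T *m M0 = 0.
  have : (\rank M0 < p)%N \/ \rank M0 = p.
    by have := rank_leq_row M0; rewrite leq_eqVlt => /orP [/eqP ->|->]; [right|left].
  case=> [lt|eq].
    by case: (rk1 lt) => _ [_ HM _]; rewrite -[M0]trmxK -trmx_mul HM trmx0.
  by case: (rk2 eq) => _ ->; rewrite trmx0 mul0mx.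
have HW := mv_RX H0.
pose W w := mv Rm^T (Xc M0 w).
have mW : measurable_fun setT W := measurable_mv Rm^T (mXc M0).
have mphi : measurable_fun setT (fun x : p.-tuple R => mv Rm^T x).
  exact: (measurable_mv Rm^T (@measurable_id _ _ setT)).
have ceHs : is_cond_exp (L0 \x Qtr)%E (@Uc R p r) W hstar.
  exact: (ce_compose mphi HW ceG ceH).
have mhs : measurable_fun setT hstar by case: ceH.
have mx12 : measurable_fun setT (fun x : R * p.-tuple R => (x.1 ^+ 2)%:E).
  apply/measurable_EFinP; apply: measurable_funX; exact: measurable_fst.
have iU1 : L0.-integrable setT (fun x : R * p.-tuple R => (x.1 ^+ 2)%:E).
  apply: (le_integrable _ _ _ iL0) => // x _.
  rewrite !abse_EFin lee_fin !ger0_norm ?sqr_ge0 ?lerDl ?sumr_ge0 // => *;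
    try exact: sqr_ge0.
  by rewrite addr_ge0 ?sqr_ge0 ?sumr_ge0 // => *; exact: sqr_ge0.
have sU (Q : probability (r.-tuple R) R) : sqi (L0 \x Q)%E (@Uc R p r).
  by split; [exact: mUc | exact/(marg_integrable Q mx12)].
have Rstar : risk M0 f0 (L0 \x Qtr)%E (fun x => f0 x + hstar (mv Rm^T x)) =
    (\int[(L0 \x Qtr)%E]_w ((Uc w - hstar (W w)) ^+ 2)%:E)%E.
  rewrite /risk; apply: eq_integral => w _; congr (_%:E); rewrite /Yc /W.
  by congr (_ ^+ 2); ring.
apply/eqP; rewrite eq_le; apply/andP; split; last first.
  have mfs : measurable_fun setT fs by exact: mF fs fsI.1.
  have -> : risk M0 f0 (L0 \x Qtr)%E (fun x => f0 x + hstar (mv Rm^T x)) =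
      risk M0 f0 (L0 \x Qtr)%E fs.
    rewrite /risk; apply: (ae_eq_integral _ _ measurableT).
    - apply/measurable_EFinP; apply: measurable_funX; apply: measurable_funB.
        apply: measurable_funD; [exact: measurableT_comp mf0 (mXc M0) | exact: mUc].
      apply: measurable_funD; first exact: measurableT_comp mf0 (mXc M0).
      exact: measurableT_comp mhs mW.
    - apply/measurable_EFinP; apply: measurable_funX; apply: measurable_funB.
        apply: measurable_funD; [exact: measurableT_comp mf0 (mXc M0) | exact: mUc].
      exact: measurableT_comp mfs (mXc M0).
    - by apply: filterS fsae => w Hw _; rewrite Hw.
  by apply: ereal_inf_lbound; exists fs.
apply: le_ereal_inf_tmp => _ [f fI <-].
have mf : measurable_fun setT f := mF f fI.1.
pose hf x := f x - f0 x.
have mhf : measurable_fun setT hf := measurable_funB mf mf0.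
have msq (g : R * p.-tuple R * r.-tuple R -> R) : measurable_fun setT g ->
    measurable_fun setT (fun w => (g w ^+ 2)%:E).
  by move=> mg; apply/measurable_EFinP; exact: measurable_funX.
have Rf_eq (Q : probability (r.-tuple R) R) : Q0 Q -> risk M0 f0 (L0 \x Qtr)%E f =
    (\int[(L0 \x Q)%E]_w ((Uc w - hf (Xc M0 w)) ^+ 2)%:E)%E.
  move=> HQ; rewrite /risk.
  transitivity (\int[(L0 \x Q)%E]_w ((Yc M0 f0 w - f (Xc M0 w)) ^+ 2)%:E)%E.
    apply: law_sq; last by move=> B mB; exact: fI.2 Q HQ B mB.
    apply: measurable_funB; last exact: measurableT_comp mf (mXc M0).
    apply: measurable_funD; [exact: measurableT_comp mf0 (mXc M0) | exact: mUc].
  by apply: eq_integral => w _; rewrite /Yc /hf; congr ((_ ^+ 2)%:E); ring.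
set Rf := risk M0 f0 (L0 \x Qtr)%E f.
have Rf0 : (0 <= Rf)%E by apply: integral_ge0 => w _; rewrite lee_fin sqr_ge0.
have [->|Rfn] := eqVneq Rf +oo%E; first exact: leey.
have Rfb : Rf = (fine Rf)%:E by rewrite fineK // ge0_fin_numE // ltey.
set b := fine Rf in Rfb.
have key t : 0 < t -> t <= 1 ->
    (risk M0 f0 (L0 \x Qtr)%E (fun x => (f0 x + hstar (mv Rm^T x))%R) <=
     ((1 + t) * b + t ^+ 2 + t)%R%:E)%E.
  move=> t0 t1.
  have : (ereal_inf [set (\int[(L0 \x Q)%E]_w
                   ((gR Q (mv Rm^T (Xc M0 w)) - gX Q (Xc M0 w)) ^+ 2)%:E)%E
            | Q in Q0] < (t ^+ 2)%:E)%E.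
    by rewrite infii lte_fin exprn_gt0.
  case/ereal_inf_lt => _ [Q HQ <-] Heps.
  have [ceR ceX] := ceQ Q HQ.
  have ceUX := ce_X ceL Q ceX.
  have mgR : measurable_fun setT (gR Q) by case: ceR.
  have mgX : measurable_fun setT (gX Q) by case: ceX.
  have s5 := ce_proj ceHs mW mgR (sU Qtr).
  have mpsi : measurable_fun setT
      (fun x : R * p.-tuple R => ((x.1 - gR Q (mv Rm^T x.2)) ^+ 2)%:E).
    apply/measurable_EFinP; apply: measurable_funX; apply: measurable_funB.
      exact: measurable_fst.
    apply: measurableT_comp mgR _; apply: measurableT_comp mphi _.
    exact: measurable_snd.
  have psi0 : forall x : R * p.-tuple R, (0 <= ((x.1 - gR Q (mv Rm^T x.2)) ^+ 2)%:E)%E.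
    by move=> x; rewrite lee_fin sqr_ge0.
  have s4 : (\int[(L0 \x Qtr)%E]_w ((Uc w - gR Q (W w)) ^+ 2)%:E =
      \int[(L0 \x Q)%E]_w ((Uc w - gR Q (W w)) ^+ 2)%:E)%E.
    transitivity (\int[L0]_x ((x.1 - gR Q (mv Rm^T x.2)) ^+ 2)%:E)%E.
      rewrite -(marg_ge0 Qtr mpsi psi0); apply: eq_integral => w _.
      by rewrite /W HW.
    rewrite -(marg_ge0 Q mpsi psi0); apply: eq_integral => w _.
    by rewrite /W HW.
  have s2 := ce_proj ceUX (mXc M0) mhf (sU Q).
  rewrite -(Rf_eq Q HQ) -/Rf Rfb in s2.
  have mUgX : measurable_fun setT (fun w => Uc w - gX Q (Xc M0 w)).
    by apply: measurable_funB; [exact: mUc | exact: measurableT_comp mgX (mXc M0)].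
  have mgRX : measurable_fun setT (fun w => gR Q (W w) - gX Q (Xc M0 w)).
    by apply: measurable_funB; [exact: measurableT_comp mgR mW | exact: measurableT_comp mgX (mXc M0)].
  have mUgR : measurable_fun setT (fun w => Uc w - gR Q (W w)).
    by apply: measurable_funB; [exact: mUc | exact: measurableT_comp mgR mW].
  have s3 : (\int[(L0 \x Q)%E]_w ((Uc w - gR Q (W w)) ^+ 2)%:E <=
      (1 + t)%:E * \int[(L0 \x Q)%E]_w ((Uc w - gX Q (Xc M0 w)) ^+ 2)%:E +
      (1 + t^-1)%:E * \int[(L0 \x Q)%E]_w ((gR Q (W w) - gX Q (Xc M0 w)) ^+ 2)%:E)%E.
    have k1 : (0 <= (1 + t)%:E)%E by rewrite lee_fin; lra.
    have k2 : (0 <= (1 + t^-1)%:E)%E by rewrite lee_fin addr_ge0 // invr_ge0 ltW.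
    have sq0 (g : R * p.-tuple R * r.-tuple R -> R) :
      forall w, setT w -> (0 <= (g w ^+ 2)%:E)%E by move=> w _; rewrite lee_fin sqr_ge0.
    rewrite -(ge0_integralZl _ measurableT (msq _ mUgX) (sq0 _) k1).
    rewrite -(ge0_integralZl _ measurableT (msq _ mgRX) (sq0 _) k2).
    rewrite -ge0_integralD //; last 4 first.
    - by move=> w _; apply: mule_ge0 => //; rewrite lee_fin sqr_ge0.
    - by apply: measurable_funeM; exact: msq.
    - by move=> w _; apply: mule_ge0 => //; rewrite lee_fin sqr_ge0.
    - by apply: measurable_funeM; exact: msq.
    apply: ge0_le_integral => //.
    - by move=> w _; rewrite lee_fin sqr_ge0.
    - exact: msq.
    - apply: emeasurable_funD; apply: measurable_funeM; exact: msq.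
    move=> w _; rewrite -!EFinM -EFinD lee_fin.
    have := @sq_split R (Uc w - gX Q (Xc M0 w)) (gX Q (Xc M0 w) - gR Q (W w)) t t0.
    have -> : Uc w - gX Q (Xc M0 w) + (gX Q (Xc M0 w) - gR Q (W w)) = Uc w - gR Q (W w) by ring.
    by rewrite -(sqrrN (gX _ _ - _)) opprB.
  apply: (@le_trans _ _ (\int[(L0 \x Qtr)%E]_w ((Uc w - hstar (W w)) ^+ 2)%:E)%E).
    by rewrite le_eqVlt; apply/orP; left; apply/eqP; exact: Rstar.
  apply: (le_trans s5); rewrite s4; apply: (le_trans s3).
  apply: le_trans (leeD (lee_wpmul2l _ s2) (lee_wpmul2l _ (ltW Heps))) _.
  - by rewrite lee_fin; lra.
  - by rewrite lee_fin addr_ge0 // invr_ge0 ltW.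
  rewrite -!EFinM -EFinD lee_fin.
  have -> : (1 + t^-1) * t ^+ 2 = t ^+ 2 + t by field; rewrite gt_eqF.
  by rewrite addrA.
have rs0 : (0 <= risk M0 f0 (L0 \x Qtr)%E (fun x => (f0 x + hstar (mv Rm^T x))%R))%E.
  by apply: integral_ge0 => w _; rewrite lee_fin sqr_ge0.
have rsfin : risk M0 f0 (L0 \x Qtr)%E (fun x => (f0 x + hstar (mv Rm^T x))%R) =
    (fine (risk M0 f0 (L0 \x Qtr)%E (fun x => (f0 x + hstar (mv Rm^T x))%R)))%:E.
  rewrite fineK // ge0_fin_numE //.
  by apply: le_lt_trans (key 1 ltr01 (lexx _)) _; rewrite ltey.
rewrite rsfin Rfb lee_fin; apply: final_real.
  by rewrite -lee_fin -Rfb.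
by move=> t t0 t1; rewrite -lee_fin -rsfin; exact: key.
Qed.
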